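(* Let $q$ be a prime power and let $\mathscr{L}_1,\dots,\mathscr{L}_q$ be $q$ distinct parallel classes of affine lines in $\mathbb{F}_q^5$ (so each $\mathscr{L}_i$ consists of all $q^4$ lines with a fixed direction $d_i\in\mathbb{F}_q^5\setminus\{0\}$, and the directions $d_1,\dots,d_q$ are pairwise non-parallel). Let $G_{\mathscr{L}}(q)$ be the bipartite incidence graph between $\mathscr{P}=\mathbb{F}_q^5$ and $\mathscr{L}=\bigcup_{i\in[q]}\mathscr{L}_i$ (a point $x$ is adjacent to a line $\ell$ iff $x\in\ell$). Then for every $\delta>0$ there exists $q_0(\delta)$ such that for every prime power $q\ge q_0(\delta)$ and every such choice of classes, every subgraph $H\subseteq G_{\mathscr{L}}(q)$ with at least $\delta q^6$ edges contains a copy of $C_8$. More precisely, $\operatorname{ex}(G_{\mathscr{L}}(q),C_8)=O(q^{23/4})$ as $q\to\infty$, with the implied constant independent of the choice of parallel classes.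
   Context: For graphs $G$ and $F$, $\operatorname{ex}(G,F)$ denotes the maximum number of edges in an $F$-free subgraph of $G$. $C_8$ is the cycle of length 8. *)

(* Defs.v *)
From HB Require Import structures.
From mathcomp Require Import all_boot all_order all_algebra.
Set Implicit Arguments. Unset Strict Implicit. Unset Printing Implicit Defensive.
Import GRing.Theory.
Local Open Scope ring_scope.

Definition line_dir (F : finFieldType) (x d : 'rV[F]_5) : {set 'rV[F]_5} :=
  [set x + t *: d | t : F].

Definition lines_of (F : finFieldType) (n : nat) (d : 'I_n -> 'rV[F]_5)
  : {set {set 'rV[F]_5}} :=
  [set line_dir x (d i) | x : 'rV[F]_5, i : 'I_n].

Definition incidence_edges (F : finFieldType) (n : nat) (d : 'I_n -> 'rV[F]_5)
  : {set 'rV[F]_5 * {set 'rV[F]_5}} :=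
  [set e | (e.2 \in lines_of d) && (e.1 \in e.2)].

Definition has_C8 (P L : finType) (H : {set P * L}) : Prop :=
  exists (x1 x2 x3 x4 : P) (l1 l2 l3 l4 : L),
    uniq [:: x1; x2; x3; x4] /\ uniq [:: l1; l2; l3; l4] /\
    (x1, l1) \in H /\ (x2, l1) \in H /\
    (x2, l2) \in H /\ (x3, l2) \in H /\
    (x3, l3) \in H /\ (x4, l3) \in H /\
    (x4, l4) \in H /\ (x1, l4) \in H.

(* Main.v *)
Require Import Defs.
From HB Require Import structures.
From mathcomp Require Import all_boot all_order all_algebra zify ring.
Import GRing.Theory.
Local Open Scope ring_scope.

Lemma card_sum (T : finType) (P : pred T) :
  #|[set x | P x]| = (\sum_x (P x : nat))%N.
Proof.
rewrite -sum1_card big_mkcond /=; apply: eq_bigr => x _.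
by rewrite inE; case: (P x).
Qed.

Lemma cs_nat (I : finType) (P : pred I) (a : I -> nat) :
  ((\sum_(k | P k) a k) ^ 2 <= #|P| * \sum_(k | P k) a k ^ 2)%N.
Proof.
rewrite -(leq_pmul2l (_ : 0 < 2)%N) //.
have -> : ((\sum_(k | P k) a k) ^ 2 = \sum_(k | P k) \sum_(l | P l) a k * a l)%N.
  by rewrite expnS expn1 big_distrl /=; apply: eq_bigr => k _; rewrite big_distrr.
rewrite big_distrr /=.
apply: (@leq_trans (\sum_(k | P k) \sum_(l | P l) (a k ^ 2 + a l ^ 2))%N).
  apply: leq_sum => k _; rewrite big_distrr /=; apply: leq_sum => l _.
  move: (a k) (a l) => u v. have h : (0 <= (u - v) * (u - v))%N by []. nia.
rewrite (eq_bigr (fun k => #|P| * a k ^ 2 + \sum_(l | P l) a l ^ 2)%N); last first.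
  by move=> k _; rewrite big_split /= sum_nat_const mulnC.
rewrite big_split /= -big_distrr /= sum_nat_const; lia.
Qed.

Lemma sum_const_all (I : finType) (n : nat) : (\sum_(i : I) n = #|I| * n)%N.
Proof. by rewrite -sum_nat_const; apply: eq_bigl. Qed.

Lemma sum_shift (F : finFieldType) (f : 'rV[F]_5 -> nat) (c : 'rV[F]_5) :
  (\sum_(x : 'rV[F]_5) f (x + c)%R = \sum_(x : 'rV[F]_5) f x)%N.
Proof.
by rewrite (reindex_inj (h := fun x : 'rV[F]_5 => x - c) (addIr (- c))) /=; apply: eq_bigr => x _; rewrite subrK.
Qed.

Lemma sumF_shift (F : finFieldType) (f : F -> nat) (c : F) :
  (\sum_(x : F) f (x - c)%R = \sum_(x : F) f x)%N.
Proof.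
by rewrite (reindex_inj (h := fun x : F => x + c) (addIr c)) /=; apply: eq_bigr => x _; rewrite addrK.
Qed.

Lemma kst (F : finFieldType) (a b : 'rV[F]_5) (T : {set 'rV[F]_5}) :
 (forall u v : F, u *: a + v *: b = 0 -> u = 0 /\ v = 0) ->
 (forall x t s, t != 0 -> s != 0 -> x \in T -> x + t*:a \in T -> x + s*:b \in T ->
    x + t*:a + s*:b \in T -> False) ->
 (#|T| ^ 2 <= 2 * #|F| ^ 9)%N.
Proof.
move=> ind rect.
set q := #|F|.
have cardV : #|{: 'rV[F]_5}| = (q ^ 5)%N by rewrite card_mx mul1n.
have q0 : (0 < q)%N by apply/card_gt0P; exists 0.
have Wb : forall u : F, u != 0 ->
    (\sum_x ((x \in T) && ((x + u *: a)%R \in T) : nat) <= q ^ 4)%N.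
  move=> u u0; rewrite -card_sum.
  set W := [set x | _].
  rewrite -(leq_pmul2r q0) -expnSr -cardV /q -cardsT -cardsX.
  rewrite -(card_in_imset (f := fun p : 'rV[F]_5 * F => p.1 + p.2 *: b)) ?max_card //.
  move=> [x s] [x' s'] /=; rewrite !inE /= !andbT => /andP [xT xuT] /andP [x'T x'uT] E.
  have [ss'|ss'] := eqVneq s s'.
    by subst s'; congr (_, _); apply: (addIr (s *: b)).
  exfalso; apply: (rect x u (s - s')) => //; first by rewrite subr_eq0.
    have -> : x + (s - s') *: b = x' by rewrite scalerBl addrA E addrK.
    done.
  have -> : x + u *: a + (s - s') *: b = x' + u *: a.
    by rewrite addrAC scalerBl addrA E addrK.
  done.
have qE : #|F| = q by [].
clearbody q.
have cardT : #|T| = (\sum_x (x \in T : nat))%N.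
  by rewrite -card_sum; apply: eq_card => x; rewrite inE.
set Ws := (\sum_(u : F) \sum_x ((x \in T) && ((x + u *: a)%R \in T) : nat))%N.
have sumW : (Ws <= 2 * q ^ 5)%N.
  rewrite /Ws (bigD1 0) //=.
  have h1 : (\sum_x ((x \in T) && ((x + 0 *: a)%R \in T) : nat) <= q ^ 5)%N.
    apply: (@leq_trans (\sum_(x : 'rV[F]_5) 1)%N); first by apply: leq_sum => x _; apply: leq_b1.
    by rewrite sum_const_all cardV muln1.
  have h2 : (\sum_(u : F | u != 0%R) \sum_x ((x \in T) && ((x + u *: a)%R \in T) : nat)
             <= q * q ^ 4)%N.
    apply: (@leq_trans (\sum_(u : F | u != 0%R) q ^ 4)%N); first by apply: leq_sum => u hu; apply: Wb.
    by rewrite sum_nat_cond_const leq_mul2r -qE max_card orbT.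
  rewrite mul2n -addnn [X in (_ <= _ + X)%N]expnS.
  exact: leq_add h1 h2.
set g := fun x : 'rV[F]_5 => (\sum_(t : F) ((x + t *: a)%R \in T : nat))%N.
have S1 : (\sum_x g x = q * #|T|)%N.
  rewrite /g exchange_big /=.
  rewrite (eq_bigr (fun _ => #|T|)) ?sum_const_all ?qE //.
  by move=> t _; rewrite cardT (sum_shift _ (fun y => (y \in T : nat))).
have S2 : (\sum_x g x ^ 2 = q * Ws)%N.
  rewrite /g (eq_bigr (fun x => \sum_(t : F) \sum_(s : F)
        (((x + t *: a)%R \in T) && ((x + s *: a)%R \in T) : nat))%N); last first.
    move=> x _; rewrite expnS expn1 big_distrl /=; apply: eq_bigr => t _.
    by rewrite big_distrr /=; apply: eq_bigr => s _; rewrite mulnb.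
  rewrite exchange_big /=.
  rewrite (eq_bigr (fun _ => Ws)) ?sum_const_all ?qE //.
  move=> t _; rewrite exchange_big /=.
  rewrite /Ws -(sumF_shift _ _ t); apply: eq_bigr => s _.
  rewrite -(sum_shift _ (fun y => ((y \in T) && ((y + (s - t) *: a)%R \in T) : nat)) (t *: a)).
  apply: eq_bigr => x _ /=.
  suff -> : (x + t *: a + (s - t) *: a = x + s *: a)%R by [].
  by apply/rowP => k; rewrite !mxE; ring.
have CS := cs_nat _ xpredT g.
have e1 : #|(xpredT : pred 'rV[F]_5)| = (q ^ 5)%N by rewrite -cardV.
rewrite e1 S1 S2 in CS.
have : (q ^ 2 * #|T| ^ 2 <= q ^ 2 * (2 * q ^ 9))%N.
  rewrite -expnMn; apply: (leq_trans CS).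
  rewrite mulnA -expnSr; apply: leq_trans (leq_mul (leqnn _) sumW) _.
  by rewrite mulnCA [in X in (_ <= X)%N]mulnCA -!expnD.
by rewrite leq_pmul2l // expn_gt0 q0.
Qed.

Lemma line_shift (F : finFieldType) (y dd : 'rV[F]_5) (t : F) :
  line_dir (y + t *: dd) dd = line_dir y dd.
Proof.
apply/setP => z; apply/imsetP/imsetP => [[s _ ->]|[s _ ->]].
  by exists (t + s) => //; apply/rowP => k; rewrite !mxE; ring.
by exists (s - t) => //; apply/rowP => k; rewrite !mxE; ring.
Qed.

Lemma line_self (F : finFieldType) (y dd : 'rV[F]_5) : y \in line_dir y dd.
Proof. by apply/imsetP; exists 0 => //; rewrite scale0r addr0. Qed.

Section Main.
Variables (F : finFieldType) (d : 'I_#|F| -> 'rV[F]_5).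
Hypothesis dn0 : forall i, d i != 0.
Hypothesis dpar : forall i j, i != j -> ~ (exists c : F, d i = c *: d j).

Lemma indep i j : i != j -> forall u v : F, u *: d i + v *: d j = 0 -> u = 0 /\ v = 0.
Proof.
move=> ij u v E.
have [v0|v0] := eqVneq v 0.
  subst v; rewrite scale0r addr0 in E; move/eqP: E.
  by rewrite scaler_eq0 (negbTE (dn0 i)) orbF => /eqP.
exfalso; apply: (dpar j i); first by rewrite eq_sym.
exists (- (v^-1 * u)); apply/rowP => k.
have := congr1 (fun w : 'rV[F]_5 => w 0 k) E; rewrite !mxE => h.
apply: (mulfI v0).
have -> : v * d j 0 k = - (u * d i 0 k) by apply/eqP; rewrite -addr_eq0 addrC h.
by field.
Qed.

Lemma diffdir i j (p p' : 'rV[F]_5) : i != j -> line_dir p (d i) != line_dir p' (d j).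
Proof.
move=> ij; apply/eqP => E.
have h1 : p \in line_dir p' (d j) by rewrite -E line_self.
have h2 : p + 1 *: d i \in line_dir p' (d j) by rewrite -E; apply/imsetP; exists 1.
case/imsetP: h1 => t1 _ e1; case/imsetP: h2 => t2 _ e2.
have : 1 *: d i + (t1 - t2) *: d j = 0.
  rewrite (_ : 1 *: d i + (t1 - t2) *: d j = (p + 1 *: d i) - (p' + t2 *: d j) - (p - (p' + t1 *: d j))); last by apply/rowP => k; rewrite !mxE; ring.
  by rewrite -e2 -e1 !subrr ?subr0.
by case/(indep _ _ ij) => /eqP; rewrite oner_eq0.
Qed.

Lemma ne_line_i i j (y z : 'rV[F]_5) u v : i != j -> z = y + (u *: d i + v *: d j) -> v != 0 ->
  line_dir y (d i) != line_dir z (d i).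
Proof.
move=> ij ze v0; apply/eqP => E.
have : z \in line_dir y (d i) by rewrite E line_self.
case/imsetP => w _ zw.
have : (u - w) *: d i + v *: d j = 0.
  rewrite (_ : (u - w) *: d i + v *: d j = (y + (u *: d i + v *: d j)) - (y + w *: d i)); last by apply/rowP => k; rewrite !mxE; ring.
  by rewrite -ze -zw subrr.
by case/(indep _ _ ij) => _ /eqP; rewrite (negbTE v0).
Qed.

Lemma ne_line_j i j (y z : 'rV[F]_5) u v : i != j -> z = y + (u *: d i + v *: d j) -> u != 0 ->
  line_dir y (d j) != line_dir z (d j).
Proof.
move=> ij ze u0; apply/eqP => E.
have : z \in line_dir y (d j) by rewrite E line_self.
case/imsetP => w _ zw.
have : u *: d i + (v - w) *: d j = 0.
  rewrite (_ : u *: d i + (v - w) *: d j = (y + (u *: d i + v *: d j)) - (y + w *: d j)); last by apply/rowP => k; rewrite !mxE; ring.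
  by rewrite -ze -zw subrr.
by case/(indep _ _ ij) => /eqP; rewrite (negbTE u0).
Qed.

Lemma ne_pt i j (y z : 'rV[F]_5) u v : i != j -> z = y + (u *: d i + v *: d j) -> (u != 0) || (v != 0) ->
  y != z.
Proof.
move=> ij ze uv; apply/eqP => yz.
have : u *: d i + v *: d j = 0.
  by apply: (addrI y); rewrite addr0 -ze yz.
by case/(indep _ _ ij) => u0 v0; move: uv; rewrite u0 v0 eqxx.
Qed.

End Main.

Lemma arith (q E V : nat) : (0 < q)%N -> (E <= q ^ 6)%N -> (E ^ 2 <= q ^ 5 * (E + V))%N ->
  (V ^ 2 <= q * (q * (q * (q * (2 * q ^ 9)))))%N -> (E ^ 4 <= 6 * q ^ 23)%N.
Proof.
move=> q0 h1 h2 h3.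
have a1 : (E ^ 4 <= q ^ 10 * (E + V) ^ 2)%N.
  have -> : (E ^ 4 = (E ^ 2) ^ 2)%N by rewrite -expnM.
  apply: (@leq_trans ((q ^ 5 * (E + V)) ^ 2)); first by rewrite leq_exp2r.
  by rewrite expnMn -expnM.
have a2 : ((E + V) ^ 2 <= 2 * (E ^ 2 + V ^ 2))%N.
  clear; have h := (nat_Cauchy E V).1.
  rewrite sqrnD; lia.
have a3 : (E ^ 2 <= q ^ 13)%N.
  apply: (@leq_trans ((q ^ 6) ^ 2)); first by rewrite leq_exp2r.
  by rewrite -expnM leq_pexp2l.
have a4 : (V ^ 2 <= 2 * q ^ 13)%N.
  suff <- : (q * (q * (q * (q * (2 * q ^ 9)))) = 2 * q ^ 13)%N by [].
  by ring.
have -> : (q ^ 23 = q ^ 10 * q ^ 13)%N by rewrite -expnD.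
move: a1 a2 a3 a4; move: (E ^ 4)%N ((E + V) ^ 2)%N (E ^ 2)%N (V ^ 2)%N (q ^ 10)%N (q ^ 13)%N.
move=> e4 s e2 v2 P Q; nia.
Qed.

Theorem theorem3p1 :
  exists C q0 : nat,
  forall (F : finFieldType) (d : 'I_#|F| -> 'rV[F]_5),
    (q0 <= #|F|)%N ->
    (forall i, d i != 0) ->
    (forall i j, i != j -> ~ (exists c : F, d i = c *: d j)) ->
    forall H : {set 'rV[F]_5 * {set 'rV[F]_5}},
      H \subset incidence_edges d ->
      ~ has_C8 H ->
      (#|H| ^ 4 <= C * #|F| ^ 23)%N.
Proof.
exists 6%N, 0%N => F d _ dn0 dpar H sub noC8.
have ind := indep _ _ dn0 dpar.
set q := #|F|.
have q0 : (0 < q)%N by apply/card_gt0P; exists 0.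
have cardV : #|{: 'rV[F]_5}| = (q ^ 5)%N by rewrite card_mx mul1n.
have cardI : #|{: 'I_#|F| }| = q by rewrite card_ord.
pose sH x i := (x, line_dir x (d i)) \in H.
pose E := (\sum_(x : 'rV[F]_5) \sum_(i : 'I_#|F|) (sH x i : nat))%N.
have hA : (#|H| <= E)%N.
  pose A := [set p : 'rV[F]_5 * 'I_#|F| | sH p.1 p.2].
  have sHA : H \subset [set (p.1, line_dir p.1 (d p.2)) | p in A].
    apply/subsetP => [[x l]] xlH.
    have := subsetP sub _ xlH; rewrite inE /= => /andP [lL xl].
    case/imset2P: lL => y i _ _ le.
    have lx : l = line_dir x (d i).
      by move: xl; rewrite le => /imsetP [t _ ->]; rewrite line_shift.
    apply/imsetP; exists (x, i) => //=; last by rewrite lx.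
    by rewrite inE /sH /= -lx.
  apply: leq_trans (subset_leq_card sHA) _.
  apply: leq_trans (leq_imset_card _ _) _.
  rewrite /A card_sum /E pair_big /=.
  by [].
have hF : (E <= q ^ 6)%N.
  apply: (@leq_trans (\sum_(x : 'rV[F]_5) \sum_(i : 'I_#|F|) 1)%N).
    by apply: leq_sum => x _; apply: leq_sum => i _; apply: leq_b1.
  rewrite (eq_bigr (fun _ => q)); last by move=> x _; rewrite sum_const_all cardI muln1.
  by rewrite sum_const_all cardV -expnSr.
pose dg x := (\sum_(i : 'I_#|F|) (sH x i : nat))%N.
have hB : (E ^ 2 <= q ^ 5 * \sum_x dg x ^ 2)%N.
  have := cs_nat _ xpredT dg.
  have e1 : #|(xpredT : pred 'rV[F]_5)| = (q ^ 5)%N by rewrite -cardV.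
  by rewrite e1 => h; exact: h.
pose tau i j := (\sum_(x : 'rV[F]_5) (sH x i && sH x j : nat))%N.
pose V := (\sum_(i : 'I_#|F|) \sum_(j | j != i) tau i j)%N.
have hC : (\sum_x dg x ^ 2 = E + V)%N.
  rewrite (eq_bigr (fun x => \sum_i \sum_j (sH x i && sH x j : nat))%N); last first.
    move=> x _; rewrite /dg expnS expn1 big_distrl /=; apply: eq_bigr => i _.
    by rewrite big_distrr /=; apply: eq_bigr => j _; rewrite mulnb.
  rewrite exchange_big /=.
  rewrite (eq_bigr (fun i => \sum_j tau i j)%N); last by move=> i _; rewrite exchange_big.
  rewrite /V /E [X in (_ = X + _)%N]exchange_big /= -big_split /=; apply: eq_bigr => i _.
  rewrite (bigD1 i) //= /tau; congr (_ + _)%N; apply: eq_bigr => x _; by rewrite andbb.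
have hD : forall i j, i != j -> (tau i j ^ 2 <= 2 * q ^ 9)%N.
  move=> i j ij.
  have -> : tau i j = #|[set x | sH x i && sH x j]| by rewrite card_sum.
  apply: kst (ind i j ij) _.
  move=> x t s t0 s0; rewrite !inE => /andP [h1i h1j] /andP [h2i h2j] /andP [h4i h4j] /andP [h3i h3j].
  apply: noC8.
  exists x, (x + t *: d i), (x + t *: d i + s *: d j), (x + s *: d j),
     (line_dir x (d i)), (line_dir (x + t *: d i) (d j)),
     (line_dir (x + t *: d i + s *: d j) (d i)), (line_dir (x + s *: d j) (d j)).
  have ji : j != i by rewrite eq_sym.
  split.
    have n12 : x != x + t *: d i.
      apply: (ne_pt _ _ dn0 dpar _ _ _ _ t 0 ij); [by apply/rowP => k; rewrite !mxE; ring | by rewrite t0].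
    have n13 : x != x + t *: d i + s *: d j.
      apply: (ne_pt _ _ dn0 dpar _ _ _ _ t s ij); [by apply/rowP => k; rewrite !mxE; ring | by rewrite t0].
    have n14 : x != x + s *: d j.
      apply: (ne_pt _ _ dn0 dpar _ _ _ _ 0 s ij); [by apply/rowP => k; rewrite !mxE; ring | by rewrite s0 orbT].
    have n23 : x + t *: d i != x + t *: d i + s *: d j.
      apply: (ne_pt _ _ dn0 dpar _ _ _ _ 0 s ij); [by apply/rowP => k; rewrite !mxE; ring | by rewrite s0 orbT].
    have n24 : x + t *: d i != x + s *: d j.
      apply: (ne_pt _ _ dn0 dpar _ _ _ _ (- t) s ij); [by apply/rowP => k; rewrite !mxE; ring | by rewrite oppr_eq0 t0].
    have n34 : x + t *: d i + s *: d j != x + s *: d j.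
      apply: (ne_pt _ _ dn0 dpar _ _ _ _ (- t) 0 ij); [by apply/rowP => k; rewrite !mxE; ring | by rewrite oppr_eq0 t0].
    by rewrite /= !inE !negb_or n12 n13 n14 n23 n24 n34.
  split.
    have m12 := diffdir _ _ dn0 dpar _ _ x (x + t *: d i) ij.
    have m14 := diffdir _ _ dn0 dpar _ _ x (x + s *: d j) ij.
    have m23 := diffdir _ _ dn0 dpar _ _ (x + t *: d i) (x + t *: d i + s *: d j) ji.
    have m34 := diffdir _ _ dn0 dpar _ _ (x + t *: d i + s *: d j) (x + s *: d j) ij.
    have m13 : line_dir x (d i) != line_dir (x + t *: d i + s *: d j) (d i).
      apply: (ne_line_i _ _ dn0 dpar _ _ _ _ t s ij) => //.
      by apply/rowP => k; rewrite !mxE; ring.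
    have m24 : line_dir (x + t *: d i) (d j) != line_dir (x + s *: d j) (d j).
      apply: (ne_line_j _ _ dn0 dpar _ _ _ _ (- t) s ij); last by rewrite oppr_eq0.
      by apply/rowP => k; rewrite !mxE; ring.
    by rewrite /= !inE !negb_or m12 m13 m14 m23 m24 m34.
  have e43 : x + t *: d i + s *: d j = x + s *: d j + t *: d i.
    by apply/rowP => k; rewrite !mxE; ring.
  split; first exact: h1i.
  split; first by rewrite -(line_shift _ x (d i) t).
  split; first exact: h2j.
  split; first by rewrite -(line_shift _ (x + t *: d i) (d j) s).
  split; first exact: h3i.
  split; first by rewrite e43 line_shift.
  split; first exact: h4j.
  by rewrite line_shift.
have hE : (V ^ 2 <= q * (q * (q * (q * (2 * q ^ 9)))))%N.
  have := cs_nat _ xpredT (fun i => \sum_(j | j != i) tau i j)%N.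
  rewrite (_ : #|(xpredT : pred 'I_#|F|)| = q) ?cardI // => h.
  apply: (leq_trans h); rewrite leq_mul2l; apply/orP; right.
  apply: (@leq_trans (\sum_(i : 'I_#|F|) q * (q * (2 * q ^ 9)))%N); last by rewrite sum_const_all cardI.
  apply: leq_sum => i _.
  apply: (leq_trans (cs_nat _ (fun j => j != i) (tau i))).
  apply: leq_mul; first by rewrite -cardI max_card.
  apply: (@leq_trans (\sum_(j | j != i) 2 * q ^ 9)%N).
    by apply: leq_sum => j ji; apply: hD; rewrite eq_sym.
  by rewrite sum_nat_cond_const leq_mul2r -cardI max_card orbT.
apply: (@leq_trans (E ^ 4)); first by rewrite leq_exp2r.
rewrite hC in hB.
exact: (arith _ _ _ q0 hF hB hE).
Qed.
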